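(* Let $\mathcal{A}=\{A_1,\dots,A_m\}$ be a bimodal collection of pairwise disjoint subsets of a finite abelian group $G$. Suppose that for some $i$ the set $A_i$ is a coset of its internal difference group $H_i$. Let $A_i^1,\dots,A_i^r$ be pairwise disjoint subsets whose union is $A_i$, with internal difference groups $H_i^1,\dots,H_i^r$ respectively, such that for each $j=1,\dots,r$ the set $A_i^j$ is a coset of $H_i^j$. Then the collection $\{A_1,\dots,A_{i-1},A_i^1,\dots,A_i^r,A_{i+1},\dots,A_m\}$ has the bimodal property.
   Context: $G$ is a finite abelian group written additively. The internal difference group of a subset $S\subseteq G$ is the subgroup of $G$ generated by all elements $x-y$ with $x,y\in S$. A collection $\{A_1,\dots,A_m\}$ of pairwise disjoint subsets of $G$ is bimodal (has the bimodal property) if for every $i$ and every $\delta\in G\setminus\{0\}$, the number $N_i(\delta)$ of pairs $(a,b)$ with $a\in A_i$, $b\in A_j$ for some $j\neq i$, and $a-b=\delta$, satisfies $N_i(\delta)\in\{0,|A_i|\}$. *)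

(* Defs.v *)
From mathcomp Require Import all_boot all_order all_algebra.
Set Implicit Arguments. Unset Strict Implicit. Unset Printing Implicit Defensive.
Import GRing.Theory.
Local Open Scope ring_scope.

Definition is_subgroup (G : finZmodType) (H : {set G}) : bool :=
  (0 \in H) && [forall x in H, forall y in H, x - y \in H].

Definition diffs (G : finZmodType) (S : {set G}) : {set G} :=
  [set x - y | x in S, y in S].

Definition diff_group (G : finZmodType) (S : {set G}) : {set G} :=
  [set z | [forall H : {set G}, (is_subgroup H && (diffs S \subset H)) ==> (z \in H)]].

Definition is_coset (G : finZmodType) (S H : {set G}) : Prop :=
  exists g : G, S = [set g + h | h in H].

Definition pairwise_disjoint (G : finZmodType) (I : finType) (A : I -> {set G}) : Prop :=
  forall i j : I, i != j -> [disjoint A i & A j].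

Definition Ncount (G : finZmodType) (I : finType) (A : I -> {set G}) (i : I) (d : G) : nat :=
  #|[set ab : G * G | [&& ab.1 \in A i,
                          [exists j : I, (j != i) && (ab.2 \in A j)] &
                          ab.1 - ab.2 == d]]|.

Definition bimodal (G : finZmodType) (I : finType) (A : I -> {set G}) : Prop :=
  pairwise_disjoint A /\
  forall (i : I) (d : G), d != 0 -> Ncount A i d = 0%N \/ Ncount A i d = #|A i|.

Definition refine_coll (G : finZmodType) (m : nat) (A : 'I_m -> {set G}) (i0 : 'I_m)
    (r : nat) (B : 'I_r -> {set G}) : ({j : 'I_m | j != i0} + 'I_r)%type -> {set G} :=
  fun k => match k with inl j => A (val j) | inr l => B l end.
Arguments refine_coll {G m} A i0 {r} B _.

(* Main.v *)
Require Import Defs.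
From mathcomp Require Import all_boot all_order all_algebra.
Set Implicit Arguments. Unset Strict Implicit. Unset Printing Implicit Defensive.
Import GRing.Theory.
Local Open Scope ring_scope.

Definition Nset (G : finZmodType) (I : finType) (C : I -> {set G}) (i : I) (d : G) : {set G} :=
  [set a in C i | [exists j : I, (j != i) && (a - d \in C j)]].

Lemma NcountE (G : finZmodType) (I : finType) (C : I -> {set G}) i d :
  Ncount C i d = #|Nset C i d|.
Proof.
rewrite /Ncount -(card_imset _ (f := fun a => (a, a - d))); last first.
  by move=> x y [].
apply: eq_card => -[x y]; rewrite inE /=.
apply/idP/imsetP.
- case/and3P => hx /existsP[j /andP[hj hy]] /eqP hd.
  exists x; last by rewrite -hd subKr.
  rewrite inE hx; apply/existsP; exists j; by rewrite -hd subKr hj.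
- case => a; rewrite inE => /andP[ha /existsP[j /andP[hj hx]]] [-> ->].
  rewrite ha subKr eqxx andbT /=; apply/existsP; exists j; by rewrite hj.
Qed.

Lemma dg_sub (G : finZmodType) (S : {set G}) z w :
  z \in diff_group S -> w \in diff_group S -> z - w \in diff_group S.
Proof.
rewrite !inE => /forallP Hz /forallP Hw; apply/forallP => H; apply/implyP => HH.
have hz := implyP (Hz H) HH; have hw := implyP (Hw H) HH.
case/andP: HH => /andP[_ /forallP Hs] _.
by have := implyP (Hs z) hz => /forall_inP; apply.
Qed.

Lemma coset_mem (G : finZmodType) (S : {set G}) a d :
  is_coset S (diff_group S) -> a \in S -> (a - d \in S) = (d \in diff_group S).
Proof.
case=> g eS; move: (diff_group S) (@dg_sub _ S) eS => K dgK ->; case/imsetP => h hh ->.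
apply/imsetP/idP.
- case=> h' hh' e.
  have e' : h - d = h' by apply: (addrI g); rewrite addrA.
  rewrite -[d](subKr h) e'.
  exact: dgK.
- move=> hd; exists (h - d); first exact: dgK.
  by rewrite addrA.
Qed.

Lemma bimodalP (G : finZmodType) (I : finType) (C : I -> {set G}) :
  pairwise_disjoint C ->
  (forall k d, d != 0 -> Nset C k d = set0 \/ Nset C k d = C k) -> bimodal C.
Proof.
move=> dC H; split=> // k d hd; rewrite NcountE.
by case: (H k d hd) => ->; [left; exact: cards0 | right].
Qed.

Lemma bimodalN (G : finZmodType) (I : finType) (C : I -> {set G}) k d :
  bimodal C -> d != 0 -> Nset C k d = set0 \/ Nset C k d = C k.
Proof.
case=> _ bC hd; case: (bC k d hd); rewrite NcountE => h.
  by left; exact: cards0_eq.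
right; apply/eqP; rewrite eqEcard h leqnn andbT.
by apply/subsetP => x; rewrite inE => /andP[].
Qed.

Theorem theorem2p12 (G : finZmodType) (m : nat) (A : 'I_m -> {set G}) (i : 'I_m)
    (r : nat) (B : 'I_r -> {set G}) :
  bimodal A ->
  is_coset (A i) (diff_group (A i)) ->
  pairwise_disjoint B ->
  (\bigcup_(j < r) B j) = A i ->
  (forall j : 'I_r, is_coset (B j) (diff_group (B j))) ->
  bimodal (refine_coll A i B).
Proof.
move=> bA cAi dB UB cB.
have dA := bA.1.
have BsubA l : B l \subset A i by rewrite -UB; apply: (bigcup_sup l).
apply: bimodalP.
- move=> [j1|l1] [j2|l2] hne /=.
  + apply: dA; apply: contraNneq hne => e; apply/eqP; congr inl; exact: val_inj.
  + apply: disjointWr (BsubA l2) _; exact: dA (valP j1).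
  + apply: disjointWl (BsubA l1) _; rewrite disjoint_sym; exact: dA (valP j2).
  + by apply: dB; apply: contraNneq hne => ->.
- move=> [j|l] d hd.
  + have Heq : Nset (refine_coll A i B) (inl j) d = Nset A (val j) d.
      apply/setP => a; rewrite !inE /=; congr (_ && _); apply/existsP/existsP.
      * case=> -[j'|l'] /andP[hne hx]; move: hx => /= hx.
          exists (val j'); rewrite hx andbT; apply: contraNneq hne => e.
          by apply/eqP; congr inl; exact: val_inj.
        exists i; rewrite (subsetP (BsubA l') _ hx) andbT eq_sym; exact: (valP j).
      * case=> k /andP[hk hx]; case: (eqVneq k i) => [ek|nk].
          subst k; move: hx; rewrite -UB => /bigcupP[l _ hl].
          by exists (inr l); rewrite hl.
        exists (inl (exist _ k nk)); rewrite /= hx andbT.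
        apply: (contraNneq _ hk) => e.
        by have := congr1 (fun s => if s is inl x then val x else i) e => /= ->.
    rewrite Heq; exact: bimodalN.
  + case: (boolP (d \in diff_group (B l))) => hK.
      left; apply/setP => a; rewrite !inE /=; apply/negbTE; apply/negP.
      case/andP => ha /existsP[k /andP[hk hx]].
      have hb : a - d \in B l by rewrite (coset_mem _ (cB l) ha).
      case: k hk hx => [j|l'] hk /= hx.
        by move: (subsetP (BsubA l) _ hb); rewrite (disjointFr (dA _ _ (valP j)) hx).
      have hl' : l' != l by apply: contraNneq hk => ->.
      by rewrite (disjointFr (dB _ _ hl') hx) in hb.
    case: (boolP (d \in diff_group (A i))) => hKA.
      right; apply/setP => a; rewrite !inE /=; case ha: (a \in B l) => //=.
      have haA := subsetP (BsubA l) _ ha.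
      have hx : a - d \in A i by rewrite (coset_mem _ cAi haA).
      move: hx; rewrite -UB => /bigcupP[l' _ hl'].
      apply/existsP; exists (inr l'); rewrite hl' andbT /=.
      apply/negP => /eqP [e]; subst l'.
      by rewrite -(coset_mem _ (cB l) ha) hl' in hK.
    have Heq : Nset (refine_coll A i B) (inr l) d = B l :&: Nset A i d.
      apply/setP => a; rewrite !inE /=; case ha: (a \in B l) => //=.
      have haA := subsetP (BsubA l) _ ha; rewrite haA /=.
      have hnx : a - d \notin A i by rewrite (coset_mem _ cAi haA).
      apply/existsP/existsP.
      * case=> -[j|l'] /andP[hk hx]; move: hx => /= hx.
          by exists (val j); rewrite (valP j) hx.
        by rewrite (subsetP (BsubA l') _ hx) in hnx.
      * by case=> k /andP[hk hx]; exists (inl (exist _ k hk)); rewrite /= hx.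
    rewrite Heq; case: (bimodalN i bA hd) => ->.
      by left; exact: setI0.
    by right; apply/setIidPl; exact: BsubA.
Qed.
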